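(* For every integer $n\ge 1$, the toric ideal $I_{S_n}$ has a state polytope that is unimodularly equivalent to the permutohedron $\Pi_n$. In particular, $I_{S_n}$ has exactly $n!$ distinct initial ideals, namely the initial ideals with respect to the weight vectors $(\pi,\pi^c)\in\mathbb{R}^{2n}$ for $\pi\in\mathfrak{S}_n$.
   Context: With $e_i\in\mathbb{R}^{n+1}$ the standard basis vectors, let $s_i=e_1+e_{i+1}+e_{n+1}$ for $1\le i<n$, $s_n=e_1+e_{n+1}$, $s_i=e_{i+1-n}+e_{n+1}$ for $n<i<2n$, $s_{2n}=e_{n+1}$. The toric ideal $I_{S_n}$ is the kernel of $\mathbb{C}[t_1,\dots,t_{2n}]\to\mathbb{C}[x_1,\dots,x_{n+1}]$, $t_i\mapsto x^{s_i}$; it is homogeneous. For a weight $w\in\mathbb{R}^{2n}$, the initial ideal is generated by the initial forms (terms of maximal $w$-weight, ties broken by a fixed monomial order) of elements of the ideal. The Gröbner fan of a homogeneous ideal is the fan whose cones are the closures of the sets of weight vectors giving the same initial ideal; a state polytope of the ideal is a polytope whose normal fan (with normal cones $N_P(F)=\{a:\ F \text{ is the set of maximizers of } a\cdot x \text{ on } P\}$) equals the Gröbner fan. $\Pi_n=\mathrm{conv}\{(\pi_1,\dots,\pi_n):\pi\in\mathfrak{S}_n\}$, and for $\pi\in\mathfrak{S}_n$, $\pi^c=(n+1-\pi_1,\dots,n+1-\pi_n)$. Polytopes $P,P'\subseteq\mathbb{R}^m$ are unimodularly equivalent if $P'=MP+v$ with $M\in\mathrm{GL}_m(\mathbb{Z})$,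 $v\in\mathbb{Z}^m$; for $P\subseteq\mathbb{R}^N$, $P'\subseteq\mathbb{R}^m$, $N>m$, this means $P$ is unimodularly equivalent to $P'\times\{0\}$. *)

(* Defs.v *)
From HB Require Import structures.
From mathcomp Require Import all_boot all_order all_fingroup all_algebra.
From mathcomp Require Import reals.
From mathcomp Require Import complex.
From mathcomp Require Import mpoly.

Set Implicit Arguments.
Unset Strict Implicit.
Unset Printing Implicit Defensive.

Import Order.TTheory GRing.Theory Num.Theory.
Local Open Scope ring_scope.

(* The configuration S_n.  Variables t_1..t_{2n} are indexed by        *)
(* j : 'I_(n+n) with j = i-1; coordinates x_1..x_{n+1} are indexed by   *)
(* k : 'I_(n.+1) with k = (index) - 1.  expo n j k is the k-th entry of *)
(* s_{j+1}.                                                            *)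
(*   s_i = e_1 + e_{i+1} + e_{n+1}  (1 <= i < n)                        *)
(*   s_n = e_1 + e_{n+1}                                                *)
(*   s_i = e_{i+1-n} + e_{n+1}      (n < i < 2n)                        *)
(*   s_{2n} = e_{n+1}                                                   *)
Definition expo (n j k : nat) : nat :=
  nat_of_bool
    (if (j < n.-1)%N then [|| k == 0%N, k == j.+1 | k == n]
     else if j == n.-1 then (k == 0%N) || (k == n)
     else if (j < (n + n).-1)%N then (k == (j.+1 - n)%N) || (k == n)
     else k == n).

Definition svec (n : nat) (j : 'I_(n + n)) : 'X_{1.. n.+1} :=
  [multinom expo n j k | k < n.+1].

Section Toric.
Variable C : nzRingType.

Definition toric_map (n : nat) (f : {mpoly C[n + n]}) : {mpoly C[n.+1]} :=
  comp_mpoly [tuple ('X_[@svec n j] : {mpoly C[n.+1]}) | j < n + n] f.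

Definition toric_ideal (n : nat) : {mpoly C[n + n]} -> Prop :=
  fun f => toric_map f = 0.
End Toric.

Section Initial.
Variable R : realType.
Variable N : nat.
Notation C := (R[i]).
Notation poly := {mpoly C[N]}.

Definition ideal_gen (G : poly -> Prop) : poly -> Prop :=
  fun p => exists (k : nat) (g h : 'I_k -> poly),
      (forall l, G (g l)) /\ p = \sum_(l < k) h l * g l.

Definition same_set (T : Type) (A B : T -> Prop) : Prop :=
  forall x, A x <-> B x.

Definition mweight (w : 'cV[R]_N) (m : 'X_{1.. N}) : R :=
  \sum_(l < N) w l 0 * (m l)%:R.

Definition in_form (w : 'cV[R]_N) (f : poly) : poly :=
  \sum_(m <- msupp f | all (fun m' => mweight w m' <= mweight w m) (msupp f))
     f@_m *: 'X_[m].

Definition init_ideal (w : 'cV[R]_N) (I : poly -> Prop) : poly -> Prop :=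
  ideal_gen (fun g => exists f, I f /\ g = in_form w f).

(* monomial (term) orders on the monomials 'X_{1..N}, given by the strict
   relation lt: strict total order, compatible with multiplication, and
   with 1 as the least monomial (hence a well-order, by Dickson). *)
Definition monomial_order (lt : rel 'X_{1.. N}) : Prop :=
  [/\ (forall a, ~~ lt a a),
      (forall a b c, lt a b -> lt b c -> lt a c),
      (forall a b, a != b -> lt a b || lt b a),
      (forall a b c, lt a b -> lt (a + c)%MM (b + c)%MM)
    & (forall a, a != 0%MM -> lt 0%MM a)].

Definition in_form_lt (w : 'cV[R]_N) (lt : rel 'X_{1.. N}) (f g : poly)
  : Prop :=
  exists m, [/\ m \in msupp f,
    (forall m', m' \in msupp f -> m' != m ->
       (mweight w m' < mweight w m) ||
       ((mweight w m' == mweight w m) && lt m' m))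
    & g = f@_m *: 'X_[m]].

Definition init_ideal_lt (w : 'cV[R]_N) (lt : rel 'X_{1.. N})
  (I : poly -> Prop) : poly -> Prop :=
  ideal_gen (fun g => exists f, I f /\ in_form_lt w lt f g).

Definition dotv (a x : 'cV[R]_N) : R := \sum_(l < N) a l 0 * x l 0.

Definition closure (S : 'cV[R]_N -> Prop) : 'cV[R]_N -> Prop :=
  fun x => forall eps : R, 0 < eps ->
    exists y, S y /\ forall l, `|x l 0 - y l 0| < eps.

Definition conv (T : finType) (pts : T -> 'cV[R]_N) : 'cV[R]_N -> Prop :=
  fun x => exists lam : T -> R,
    [/\ (forall t, 0 <= lam t), \sum_t lam t = 1 & x = \sum_t lam t *: pts t].

Definition is_polytope (P : 'cV[R]_N -> Prop) : Prop :=
  exists (k : nat) (pts : 'I_k -> 'cV[R]_N), same_set P (conv pts).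

Definition face_max (P : 'cV[R]_N -> Prop) (a : 'cV[R]_N) : 'cV[R]_N -> Prop :=
  fun x => P x /\ forall y, P y -> dotv a y <= dotv a x.

Definition normal_cone (P : 'cV[R]_N -> Prop) (a : 'cV[R]_N) :
  'cV[R]_N -> Prop :=
  fun b => same_set (face_max P b) (face_max P a).

Definition groebner_cone (I : poly -> Prop) (w : 'cV[R]_N) :
  'cV[R]_N -> Prop :=
  closure (fun w' => same_set (init_ideal w' I) (init_ideal w I)).

Definition gfan_eq_nfan (I : poly -> Prop) (P : 'cV[R]_N -> Prop) : Prop :=
  forall K : 'cV[R]_N -> Prop,
    (exists w, same_set K (groebner_cone I w)) <->
    (exists a, same_set K (closure (normal_cone P a))).

Definition state_polytope (I : poly -> Prop) (P : 'cV[R]_N -> Prop) : Prop :=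
  is_polytope P /\ gfan_eq_nfan I P.

Definition unimod_equiv (P Q : 'cV[R]_N -> Prop) : Prop :=
  exists (M : matrix int N N) (v : matrix int N 1),
    M \in unitmx /\
    same_set Q (fun y => exists x, P x /\
                   y = map_mx intr M *m x + map_mx intr v).
End Initial.

Section Perm.
Variable R : realType.

(* (pi_1, ..., pi_n) with values in {1..n}, pi : 'S_n on 0-based indices *)
Definition perm_vec (n : nat) (s : 'S_n) : 'cV[R]_n :=
  \col_(l < n) ((s l).+1)%:R.

Definition perm_vec_c (n : nat) (s : 'S_n) : 'cV[R]_n :=
  \col_(l < n) (n - s l)%:R.

Definition permutohedron (n : nat) : 'cV[R]_n -> Prop := conv (@perm_vec n).

Definition permutohedron0 (n : nat) : 'cV[R]_(n + n) -> Prop :=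
  fun y => exists x, permutohedron x /\ y = col_mx x 0.

Definition pi_weight (n : nat) (s : 'S_n) : 'cV[R]_(n + n) :=
  col_mx (perm_vec s) (perm_vec_c s).
End Perm.

(* Main.v *)
Require Import Defs.
From HB Require Import structures.
From mathcomp Require Import all_boot all_order all_fingroup all_algebra.
From mathcomp Require Import reals complex mpoly.
From mathcomp Require Import zify ring lra.
Import Order.TTheory GRing.Theory Num.Theory.
Local Open Scope ring_scope.

Set Implicit Arguments.
Unset Strict Implicit.
Unset Printing Implicit Defensive.


Section Comb.
Variable n : nat.
Notation mn := ('X_{1.. n + n}).
Notation lsh i := (lshift n (i : 'I_n)).
Notation rsh i := (rshift n (i : 'I_n)).

Definition topm (m : mn) : nat := (\sum_(i < n) m (lsh i))%N.
Definition colm (m : mn) (i : 'I_n) : nat := (m (lsh i) + m (rsh i))%N.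
Definition sim (m x : mn) : bool :=
  [forall i, colm m i == colm x i] && (topm m == topm x).

Lemma simP m x : reflect ((forall i, colm m i = colm x i) /\ topm m = topm x) (sim m x).
Proof.
apply: (iffP andP) => [[/forallP H /eqP ->]|[H ->]]; split=> //.
- by move=> i; apply/eqP/H.
- by apply/forallP=> i; rewrite H.
Qed.

Lemma sim_refl m : sim m m.
Proof. by apply/simP. Qed.
Lemma sim_sym m x : sim m x -> sim x m.
Proof. by move/simP=> [H1 H2]; apply/simP; split=> // i; rewrite H1. Qed.
Lemma sim_trans m x y : sim m x -> sim x y -> sim m y.
Proof.
move/simP=> [H1 H2] /simP [H3 H4]; apply/simP; split; last by rewrite H2.
by move=> i; rewrite H1 H3.
Qed.

Lemma colmD a b i : colm (a + b)%MM i = (colm a i + colm b i)%N.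
Proof. rewrite /colm !mnmDE; lia. Qed.
Lemma topmD a b : topm (a + b)%MM = (topm a + topm b)%N.
Proof. by rewrite /topm -big_split; apply: eq_bigr => i _; rewrite mnmDE. Qed.

Lemma simD a b c : sim a b -> sim (a + c)%MM (b + c)%MM.
Proof.
move/simP=> [H1 H2]; apply/simP; split; last by rewrite !topmD H2.
by move=> i; rewrite !colmD H1.
Qed.

Lemma Ull k i : (U_(lsh k)%MM : mn) (lsh i) = (k == i).
Proof. by rewrite mnm1E (inj_eq (@lshift_inj _ _)). Qed.
Lemma Urr k i : (U_(rsh k)%MM : mn) (rsh i) = (k == i).
Proof. by rewrite mnm1E (inj_eq (@rshift_inj _ _)). Qed.
Lemma Ulr k i : (U_(lsh k)%MM : mn) (rsh i) = 0%N.
Proof. by rewrite mnm1E eq_lrshift. Qed.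
Lemma Url k i : (U_(rsh k)%MM : mn) (lsh i) = 0%N.
Proof. by rewrite mnm1E eq_rlshift. Qed.

Lemma sum_eq1 (k : 'I_n) : (\sum_(i < n) (k == i) = 1)%N.
Proof. by rewrite (bigD1 k) //= eqxx big1 // => i; rewrite eq_sym => /negbTE ->. Qed.

Lemma sim_swap c k l :
  sim (c + U_(lsh k) + U_(rsh l))%MM (c + U_(lsh l) + U_(rsh k))%MM.
Proof.
rewrite -!addmA ![(c + _)%MM]addmC; apply: simD.
apply/simP; split.
- by move=> i; rewrite !colmD /colm !Ull !Urr !Ulr !Url !addn0 !add0n addnC.
- rewrite !topmD /topm !(eq_bigr _ (fun i _ => Url _ i)) !(eq_bigr _ (fun i _ => Ull _ i)).
  by rewrite !sum_eq1 !big1.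
Qed.

End Comb.


Section Toric.
Variable n : nat.
Hypothesis n_gt0 : (0 < n)%N.
Notation mn := ('X_{1.. n + n}).
Notation lsh i := (lshift n (i : 'I_n)).
Notation rsh i := (rshift n (i : 'I_n)).

Definition Amap (m : mn) : 'X_{1.. n.+1} :=
  [multinom (\sum_(j < n + n) m j * expo n j k)%N | k < n.+1].

Lemma sum_split (F : 'I_(n + n) -> nat) :
  (\sum_(j < n + n) F j = \sum_(i < n) F (lsh i) + \sum_(i < n) F (rsh i))%N.
Proof. by rewrite big_split_ord. Qed.

Ltac expo_solve := rewrite /expo /=;
  repeat (case: ifP => /= ?); repeat (case: eqP => /= ?); try lia.

Lemma expo_l0 (i : 'I_n) : expo n (lsh i) 0 = 1%N.
Proof. have := ltn_ord i; expo_solve. Qed.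
Lemma expo_r0 (i : 'I_n) : expo n (rsh i) 0 = 0%N.
Proof. have := ltn_ord i; expo_solve. Qed.
Lemma expo_ln (j : 'I_(n+n)) : expo n j n = 1%N.
Proof. have := ltn_ord j; expo_solve. Qed.
Lemma expo_lS (i : 'I_n) (k : nat) : (k.+1 < n)%N -> expo n (lsh i) k.+1 = (i == k :> nat).
Proof. have := ltn_ord i; expo_solve. Qed.
Lemma expo_rS (i : 'I_n) (k : nat) : (k.+1 < n)%N -> expo n (rsh i) k.+1 = (i == k :> nat).
Proof. have := ltn_ord i; expo_solve. Qed.

Lemma AmapE (m : mn) (k : 'I_n.+1) : Amap m k = (\sum_(j < n + n) m j * expo n j k)%N.
Proof. by rewrite mnmE. Qed.

Lemma Amap_top (m : mn) (k : 'I_n.+1) : k = 0%N :> nat -> Amap m k = topm m.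
Proof.
move=> hk; rewrite AmapE sum_split hk /topm.
rewrite (eq_bigr _ (fun i _ => congr1 (muln _) (expo_l0 i))).
rewrite [X in (_ + X)%N](eq_bigr (fun i => 0%N)); last by move=> i _; rewrite expo_r0 muln0.
by rewrite big1_eq addn0; apply: eq_bigr => i _; rewrite muln1.
Qed.

Lemma mdeg_col (m : mn) : mdeg m = (\sum_(i < n) colm m i)%N.
Proof. by rewrite mdegE sum_split -big_split. Qed.

Lemma Amap_tot (m : mn) (k : 'I_n.+1) : k = n :> nat -> Amap m k = mdeg m.
Proof.
move=> hk; rewrite AmapE hk mdegE; apply: eq_bigr => j _.
by rewrite expo_ln muln1.
Qed.

Lemma Amap_col (m : mn) (k : 'I_n.+1) (i : 'I_n) :
  k = i.+1 :> nat -> (i.+1 < n)%N -> Amap m k = colm m i.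
Proof.
move=> hk hi.
rewrite AmapE sum_split hk.
rewrite (eq_bigr (fun j => if j == i then m (lsh i) else 0%N)); last first.
  move=> j _; rewrite expo_lS //; case: (j =P i) => [->|hji]; first by rewrite eqxx muln1.
  by rewrite (introF eqP (fun h => hji (ord_inj h))) muln0.
rewrite [X in (_ + X)%N](eq_bigr (fun j => if j == i then m (rsh i) else 0%N)); last first.
  move=> j _; rewrite expo_rS //; case: (j =P i) => [->|hji]; first by rewrite eqxx muln1.
  by rewrite (introF eqP (fun h => hji (ord_inj h))) muln0.
by rewrite -!big_mkcond /= !big_pred1_eq.
Qed.

Lemma Amap_sim (m x : mn) : (Amap m == Amap x) = sim m x.
Proof.
apply/eqP/idP.
- move=> hA; apply/simP; split; last first.
    have := congr1 (fun u : 'X_{1..n.+1} => u ord0) hA.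
    by rewrite /= !(Amap_top _ (k := ord0)).
  have hc : forall i : 'I_n, (i.+1 < n)%N -> colm m i = colm x i.
    move=> i hi; have := congr1 (fun u : 'X_{1..n.+1} => u (Ordinal (ltnW hi : i.+1 < n.+1)%N)) hA.
    by rewrite /= !(Amap_col _ (i := i)).
  move=> i; case: (ltnP i.+1 n) => hi; first exact: hc.
  have ht := congr1 (fun u : 'X_{1..n.+1} => u ord_max) hA.
  rewrite /= !(Amap_tot _ (k := ord_max)) // !mdeg_col in ht.
  move: ht; rewrite (bigD1 i) // [X in _ = X -> _](bigD1 i) //=.
  rewrite (eq_bigr (fun j => colm x j)).
    by move/eqP; rewrite eqn_add2r => /eqP.
  move=> j hj; apply: hc; have := ltn_ord j; have := ltn_ord i.
  move: hj => /eqP hj hj1 hj2; have : (j : nat) != i by apply/eqP => /val_inj.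
  lia.
- move=> /simP [H1 H2]; apply/mnmP => k.
  case: (k =P 0%N :> nat) => [h0|h0].
    by rewrite !(Amap_top _ h0).
  case: (k =P n :> nat) => [hn|hn].
    by rewrite !(Amap_tot _ hn) !mdeg_col; apply: eq_bigr => i _.
  have hk : (k.-1 < n)%N by have := ltn_ord k; lia.
  have e : k = (Ordinal hk).+1 :> nat by rewrite /=; lia.
  have e2 : ((Ordinal hk).+1 < n)%N by rewrite /=; have := ltn_ord k; lia.
  by rewrite !(Amap_col _ e e2).
Qed.

End Toric.


Section ToricIdeal.
Variable K : comNzRingType.
Variable n : nat.
Notation mn := ('X_{1.. n + n}).

Lemma toric_mono (m : mn) : toric_map ('X_[m] : {mpoly K[n + n]}) = 'X_[Amap m].
Proof.
rewrite /toric_map comp_mpolyX.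
rewrite (eq_bigr (fun i => 'X_[@svec n i] ^+ m i)); last by move=> i _; rewrite tnth_mktuple.
rewrite mprodXnE; congr 'X_[_]; apply/mnmP => k.
rewrite mnm_sumE AmapE; apply: eq_bigr => j _.
by rewrite mulmnE mnmE mulnC.
Qed.

Lemma toric_mapE (f : {mpoly K[n + n]}) :
  toric_map f = \sum_(m <- msupp f) f@_m *: 'X_[Amap m].
Proof.
rewrite /toric_map comp_mpolyEX; apply: eq_bigr => m _.
by rewrite -toric_mono.
Qed.

Lemma fiber_sum (f : {mpoly K[n + n]}) (m0 : mn) :
  toric_ideal f -> \sum_(m <- msupp f | Amap m == Amap m0) f@_m = 0.
Proof.
rewrite /toric_ideal toric_mapE => h.
have := congr1 (mcoeff (Amap m0)) h; rewrite mcoeff0 raddf_sum /= => e.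
apply: (etrans _ e); rewrite big_mkcond /=; apply: eq_bigr => m _.
by rewrite mcoeffZ mcoeffX; case: eqP; rewrite ?mulr1 ?mulr0.
Qed.

Lemma binom_in (m x : mn) : Amap m = Amap x ->
  toric_ideal ('X_[m] - 'X_[x] : {mpoly K[n + n]}).
Proof.
by move=> h; rewrite /toric_ideal /toric_map raddfB /= -!/(toric_map _) !toric_mono h subrr.
Qed.

Lemma toric_mul (h f : {mpoly K[n + n]}) : toric_ideal f -> toric_ideal (h * f).
Proof. by rewrite /toric_ideal /toric_map rmorphM /= => ->; rewrite mulr0. Qed.

End ToricIdeal.


Lemma nat_sum_lt (I : finType) (F G : I -> nat) (k : I) :
  (forall i, F i <= G i)%N -> (F k < G k)%N -> (\sum_i F i < \sum_i G i)%N.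
Proof.
move=> H Hk; rewrite (bigD1 k) // [X in (_ < X)%N](bigD1 k) //=.
have : (\sum_(i | i != k) F i <= \sum_(i | i != k) G i)%N by apply: leq_sum => i _.
lia.
Qed.

Lemma nat_sum_le_eq (I : finType) (F G : I -> nat) :
  (forall i, F i <= G i)%N -> (\sum_i F i = \sum_i G i)%N -> forall i, F i = G i.
Proof.
move=> H He i; apply/eqP; rewrite eqn_leq H /=; rewrite leqNgt; apply/negP => hl.
by have := nat_sum_lt H hl; rewrite He ltnn.
Qed.

Section Descent.
Variable n : nat.
Notation mn := ('X_{1.. n + n}).
Notation lsh i := (lshift n (i : 'I_n)).
Notation rsh i := (rshift n (i : 'I_n)).

Lemma mn_eq (x y : mn) : (forall i, x (lsh i) = y (lsh i)) ->
  (forall i, x (rsh i) = y (rsh i)) -> x = y.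
Proof.
move=> H1 H2; apply/mnmP => j; case: (split_ordP j) => i ->; [exact: H1 | exact: H2].
Qed.

Lemma decomp (m : mn) k l : (0 < m (lsh k))%N -> (0 < m (rsh l))%N ->
  m = (m - (U_(lsh k) + U_(rsh l)) + U_(lsh k) + U_(rsh l))%MM.
Proof.
move=> h1 h2; apply: mn_eq => i; rewrite !mnmDE !mnmBE !mnmDE ?Ull ?Ulr ?Url ?Urr;
  repeat (case: eqP => /= ?; subst); lia.
Qed.

Definition Dist (m x : mn) : nat := (\sum_(i < n) (x (lsh i) - m (lsh i)))%N.

Lemma descent (m : mn) (Q : mn -> Prop) : Q m ->
  (forall c k l, k != l -> (0 < m (lsh l))%N -> (0 < m (rsh k))%N ->
      Q (c + U_(lsh l) + U_(rsh k))%MM -> Q (c + U_(lsh k) + U_(rsh l))%MM) ->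
  forall x, sim x m -> Q x.
Proof.
move=> Qm step x hx.
have [N] := ubnP (Dist m x); elim: N x hx => // N IH x hx hD.
move/simP: (hx) => [hcol htop].
case: (boolP [exists k, m (lsh k) < x (lsh k)]%N) => [/existsP [k hk]|hno].
- have [l hl] : exists l, (x (lsh l) < m (lsh l))%N.
    case: (boolP [exists l, x (lsh l) < m (lsh l)]%N) => [/existsP //|].
    rewrite negb_exists => /forallP hge; exfalso.
    have : (topm m < topm x)%N.
      by apply: (@nat_sum_lt _ (fun i => m (lsh i)) (fun i => x (lsh i)) k) => // i;
        have := hge i; rewrite -leqNgt.
    by rewrite htop ltnn.
  have hkl : k != l by apply/eqP => e; move: hk hl; rewrite e; lia.
  have hcl := hcol l; have hck := hcol k; rewrite /colm in hcl hck.
  have x1 : (0 < x (lsh k))%N by lia.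
  have x2 : (0 < x (rsh l))%N by lia.
  have m1 : (0 < m (lsh l))%N by lia.
  have m2 : (0 < m (rsh k))%N by lia.
  rewrite (decomp x1 x2).
  apply: step => //; apply: IH.
    apply: sim_trans hx; rewrite [X in sim _ X](decomp x1 x2); apply: sim_sym; exact: sim_swap.
  rewrite -ltnS; apply: leq_trans hD; rewrite ltnS /Dist.
  apply: (@nat_sum_lt _ _ (fun i => x (lsh i) - m (lsh i))%N k).
  + move=> i; rewrite !mnmDE !mnmBE !mnmDE ?Ull ?Url.
    repeat (case: eqP => /= ?; subst); try congruence; lia.
  + rewrite !mnmDE !mnmBE !mnmDE ?Ull ?Url.
    repeat (case: eqP => /= ?; subst); try congruence; lia.
- have hle : forall i, (x (lsh i) <= m (lsh i))%N.
    by move=> i; move: hno; rewrite negb_exists => /forallP /(_ i); rewrite -leqNgt.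
  have he := nat_sum_le_eq hle htop.
  suff -> : x = m by [].
  apply: mn_eq => // i; have := hcol i; rewrite /colm he; lia.
Qed.

End Descent.


Section Weights.
Variable R : realType.
Variable n : nat.
Notation mn := ('X_{1.. n + n}).
Notation lsh i := (lshift n (i : 'I_n)).
Notation rsh i := (rshift n (i : 'I_n)).
Implicit Types w : 'cV[R]_(n + n).
Notation mwt := Defs.mweight.

Lemma mweightD w (a b : mn) : mwt w (a + b)%MM = mwt w a + mwt w b.
Proof.
rewrite /Defs.mweight -big_split; apply: eq_bigr => l _.
by rewrite mnmDE natrD mulrDr.
Qed.

Lemma mweightU w (j : 'I_(n + n)) : mwt w U_(j)%MM = w j 0.
Proof.
rewrite /Defs.mweight (bigD1 j) //= mnm1E eqxx mulr1 big1 ?addr0 // => l hl.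
by rewrite mnm1E eq_sym (negbTE hl) mulr0.
Qed.

Definition dd w (i : 'I_n) : R := w (lsh i) 0 - w (rsh i) 0.

Lemma wt_swap w (c : mn) k l :
  mwt w (c + U_(lsh l) + U_(rsh k))%MM =
  mwt w (c + U_(lsh k) + U_(rsh l))%MM + (dd w l - dd w k).
Proof. rewrite !mweightD !mweightU /dd; ring. Qed.

Definition so (r : 'I_n -> 'I_n -> bool) (m : mn) : bool :=
  [forall k, forall l, ~~ [&& (0 < m (lsh k))%N, (0 < m (rsh l))%N & r l k]].

Lemma soP r (m : mn) : reflect (forall k l, (0 < m (lsh k))%N -> (0 < m (rsh l))%N -> ~~ r l k)
  (so r m).
Proof.
apply: (iffP forallP) => [H k l h1 h2|H k].
  by have := forallP (H k) l; rewrite h1 h2.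
by apply/forallP => l; apply/negP => /and3P [h1 h2 h3]; move: (H k l h1 h2); rewrite h3.
Qed.

Lemma so_neg r (m : mn) : ~~ so r m -> exists c k l,
  [/\ m = (c + U_(lsh k) + U_(rsh l))%MM, r l k & sim (c + U_(lsh l) + U_(rsh k))%MM m].
Proof.
move/soP => H.
have [k [l [h1 [h2 h3]]]] : exists k l, [/\ (0 < m (lsh k))%N, (0 < m (rsh l))%N & r l k].
  case: (boolP [exists k, exists l, [&& (0 < m (lsh k))%N, (0 < m (rsh l))%N & r l k]]).
    by move=> /existsP [k /existsP [l /and3P [h1 h2 h3]]]; exists k, l.
  rewrite negb_exists => /forallP hk; exfalso; apply: H => k l h1 h2.
  by move: (hk k); rewrite negb_exists => /forallP /(_ l); rewrite h1 h2.
exists (m - (U_(lsh k) + U_(rsh l)))%MM, k, l; split => //; first exact: decomp.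
by rewrite [X in sim _ X](decomp h1 h2); apply: sim_sym; exact: sim_swap.
Qed.

Definition ltd w (l k : 'I_n) : bool := dd w l < dd w k.

Lemma so_min w (m x : mn) : so (ltd w) m -> sim x m -> mwt w m <= mwt w x.
Proof.
move/soP => H hs; apply: (descent (Q := fun x => mwt w m <= mwt w x)) hs => // c k l hkl h1 h2.
have := H l k h1 h2; rewrite /ltd -leNgt => hle.
move=> hQ; have e := wt_swap w c k l; lra.
Qed.

Lemma min_so w (m : mn) :
  (forall x, sim x m -> mwt w m <= mwt w x) -> so (ltd w) m.
Proof.
move=> H; apply/negPn/negP => /so_neg [c [k [l [em hr hs]]]].
have := H _ hs; rewrite em wt_swap; move: hr; rewrite /ltd; lra.
Qed.

End Weights.


Section IdealGen.
Variable R : realType.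
Variable N : nat.
Notation C := (R[i]).
Notation poly := {mpoly C[N]}.
Variable G : poly -> Prop.

Lemma ig0 : ideal_gen G 0.
Proof. by exists 0%N, (fun _ => 0), (fun _ => 0); split; [case | rewrite big_ord0]. Qed.

Lemma igM h g : G g -> ideal_gen G (h * g).
Proof. by move=> Gg; exists 1%N, (fun _ => g), (fun _ => h); split => //; rewrite big_ord1. Qed.

Lemma igD p q : ideal_gen G p -> ideal_gen G q -> ideal_gen G (p + q).
Proof.
move=> [k1 [g1 [h1 [G1 ->]]]] [k2 [g2 [h2 [G2 ->]]]].
exists (k1 + k2)%N, (fun l => match split l with inl a => g1 a | inr b => g2 b end),
  (fun l => match split l with inl a => h1 a | inr b => h2 b end); split.
  by move=> l; case: (split l).
rewrite big_split_ord /=; congr (_ + _); apply: eq_bigr => a _.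
  by rewrite (unsplitK (inl _ a)).
by rewrite (unsplitK (inr _ a)).
Qed.

Lemma ig_sum (T : Type) (s : seq T) (F : T -> poly) :
  (forall x, ideal_gen G (F x)) -> ideal_gen G (\sum_(x <- s) F x).
Proof.
move=> H; elim: s => [|x s IH]; first by rewrite big_nil; exact: ig0.
by rewrite big_cons; apply: igD.
Qed.

Lemma ig_ind (P : poly -> Prop) : P 0 -> (forall p q, P p -> P q -> P (p + q)) ->
  (forall h g, G g -> P (h * g)) -> forall p, ideal_gen G p -> P p.
Proof.
move=> P0 PD PM p [k [g [h [Gg ->]]]].
by elim/big_ind: _ => // l _; apply: PM.
Qed.

End IdealGen.

Section Coef.
Variable R : realType.
Variable N : nat.
Notation C := (R[i]).
Notation poly := {mpoly C[N]}.
Notation mwt := Defs.mweight.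

Lemma sum_supp (p : poly) (s : seq 'X_{1..N}) (P : pred 'X_{1..N}) :
  uniq s -> {subset msupp p <= s} ->
  \sum_(m <- s | P m) p@_m = \sum_(m <- msupp p | P m) p@_m.
Proof.
move=> us sub.
rewrite (bigID (fun m => m \in msupp p)) /= [X in _ + X]big1 ?addr0; last first.
  by move=> m /andP [_ /memN_msupp_eq0].
rewrite (eq_bigl (fun m => (m \in msupp p) && P m)); last by move=> m; rewrite andbC.
rewrite -big_filter_cond; apply: perm_big; apply: uniq_perm.
- by rewrite filter_uniq.
- exact: msupp_uniq.
- by move=> m; rewrite mem_filter; apply/andP/idP => [[]//|h]; split => //; apply: sub.
Qed.

Lemma coef_sumD (p q : poly) (P : pred 'X_{1..N}) :
  \sum_(m <- msupp (p + q) | P m) (p + q)@_m =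
  \sum_(m <- msupp p | P m) p@_m + \sum_(m <- msupp q | P m) q@_m.
Proof.
set s := undup (msupp p ++ msupp q).
have us : uniq s by apply: undup_uniq.
rewrite -!(@sum_supp _ s) //.
- by rewrite -big_split /=; apply: eq_bigr => m _; rewrite mcoeffD.
- by move=> m hm; rewrite mem_undup mem_cat hm orbT.
- by move=> m hm; rewrite mem_undup mem_cat hm.
- by move=> m /msuppD_le; rewrite mem_undup.
Qed.

Lemma coef_sumZ (c : C) (p : poly) (P : pred 'X_{1..N}) :
  \sum_(m <- msupp (c *: p) | P m) (c *: p)@_m = c * \sum_(m <- msupp p | P m) p@_m.
Proof.
rewrite -(@sum_supp (c *: p) (msupp p)) //; last exact: msuppZ_le.
by rewrite mulr_sumr; apply: eq_bigr => m _; rewrite mcoeffZ.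
Qed.

Lemma coef_sumX (m0 : 'X_{1..N}) (P : pred 'X_{1..N}) :
  \sum_(m <- msupp ('X_[m0] : poly) | P m) ('X_[m0] : poly)@_m = (P m0)%:R.
Proof.
by rewrite msuppX big_cons big_nil addr0; case: (P m0); rewrite ?mcoeffX ?eqxx.
Qed.

Lemma in_formE (w : 'cV[R]_N) (f : poly) x :
  (in_form w f)@_x = if all (fun m' => mwt w m' <= mwt w x) (msupp f) then f@_x else 0.
Proof.
rewrite /in_form raddf_sum /=.
under eq_bigr do rewrite mcoeffZ mcoeffX.
rewrite big_mkcond /=.
case: (boolP (x \in msupp f)) => hx.
- rewrite (bigD1_seq x) //= eqxx mulr1 big1 ?addr0 //.
  by move=> m hm; case: ifP => // _; rewrite (negbTE hm) mulr0.
- rewrite big1_seq; first by case: ifP => //; rewrite (memN_msupp_eq0 hx).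
  move=> m /= hm; case: ifP => // _; case: eqP => [e|]; last by rewrite mulr0.
  by move: hx; rewrite -e hm.
Qed.

Lemma mcoeffXM (u : 'X_{1..N}) (q : poly) x :
  ('X_[u] * q)@_x = if (u <= x)%MM then q@_(x - u)%MM else 0.
Proof.
case: ifP => hu.
  by rewrite -{1}(submK hu) addmC mulrC mcoeffMX.
apply: memN_msupp_eq0; rewrite mulrC (perm_mem (msuppMX _ _)).
apply/mapP => [[m' _ e]]; move: hu; rewrite e; by rewrite lem_addr.
Qed.

Lemma mwtD (w : 'cV[R]_N) (a b : 'X_{1..N}) : mwt w (a + b)%MM = mwt w a + mwt w b.
Proof.
rewrite /Defs.mweight -big_split; apply: eq_bigr => l _.
by rewrite mnmDE natrD mulrDr.
Qed.

Lemma in_form_mulX (w : 'cV[R]_N) (u : 'X_{1..N}) (f : poly) :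
  in_form w ('X_[u] * f) = 'X_[u] * in_form w f.
Proof.
apply/mpolyP => x; rewrite [RHS]mcoeffXM [LHS]in_formE mcoeffXM.
case: (boolP (u <= x)%MM) => hu; last by case: ifP.
rewrite in_formE; congr (if _ then _ else _).
rewrite mulrC; rewrite (eq_all_r (perm_mem (msuppMX _ _))) all_map.
rewrite -{1}(submK hu) addmC; apply: eq_all => m /=.
by rewrite !mwtD lerD2l.
Qed.

End Coef.


Lemma sum_other (T : eqType) (K : zmodType) (s : seq T) (P : pred T) (F : T -> K) x :
  uniq s -> x \in s -> P x -> F x != 0 -> \sum_(y <- s | P y) F y = 0 ->
  exists y, [/\ y \in s, y != x, P y & F y != 0].
Proof.
move=> us xs Px Fx.
rewrite big_mkcond (bigD1_seq x) //= Px.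
case: (boolP (has (fun y => [&& y != x, P y & F y != 0]) s)).
  by move=> /hasP [y ys /and3P [h1 h2 h3]] _; exists y.
move=> /hasPn H; rewrite big1_seq ?addr0 => [e|y /andP [hy1 hy3]].
  by move: Fx; rewrite e eqxx.
case: ifP => // hy2; apply/eqP; apply: contraNT (H y hy3) => h.
by rewrite hy2 hy1 h.
Qed.

Lemma size_lt (K : nzRingType) N (p q : {mpoly K[N]}) m :
  {subset msupp q <= msupp p} -> m \in msupp p -> m \notin msupp q ->
  (size (msupp q) < size (msupp p))%N.
Proof.
move=> sub hp hq.
have : {subset msupp q <= rem m (msupp p)}.
  move=> y hy; rewrite (rem_filter _ (msupp_uniq p)) mem_filter sub // andbT.
  by apply: contraNneq hq => <-.
move/(uniq_leq_size (msupp_uniq q)); rewrite size_rem // => h1.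
have h2 : (0 < size (msupp p))%N by case: (msupp p) hp.
by rewrite -(prednK h2) ltnS.
Qed.

Section Groebner.
Variable R : realType.
Variable n : nat.
Hypothesis n_gt0 : (0 < n)%N.
Notation C := (R[i]).
Notation poly := {mpoly C[n + n]}.
Notation mn := ('X_{1.. n + n}).
Notation I := (@toric_ideal C n).
Notation mwt := Defs.mweight.
Notation lsh i := (lshift n (i : 'I_n)).
Notation rsh i := (rshift n (i : 'I_n)).
Implicit Types w : 'cV[R]_(n + n).

Definition phi w (m0 : mn) (p : poly) : C :=
  \sum_(m <- msupp p | sim m m0 && so (ltd w) m) p@_m.

Lemma phiD w m0 p q : phi w m0 (p + q) = phi w m0 p + phi w m0 q.
Proof. exact: coef_sumD. Qed.
Lemma phiZ w m0 c p : phi w m0 (c *: p) = c * phi w m0 p.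
Proof. exact: coef_sumZ. Qed.
Lemma phi0 w m0 : phi w m0 0 = 0.
Proof. by rewrite /phi msupp0 big_nil. Qed.
Lemma phiB w m0 p q : phi w m0 (p - q) = phi w m0 p - phi w m0 q.
Proof. by rewrite -scaleN1r phiD phiZ mulN1r. Qed.
Lemma phiX w m0 m : phi w m0 'X_[m] = (sim m m0 && so (ltd w) m)%:R.
Proof. exact: coef_sumX. Qed.

Lemma phi_in_form w m0 g : I g -> phi w m0 (in_form w g) = 0.
Proof.
move=> Ig; rewrite /phi -(@sum_supp _ _ _ (msupp g)) //; last first.
  by move=> m; rewrite !mcoeff_msupp in_formE; case: ifP => //; rewrite eqxx.
under eq_bigr do rewrite in_formE.
set topw := fun m => all (fun m' => mwt w m' <= mwt w m) (msupp g).
case: (boolP (has (fun m => [&& sim m m0, so (ltd w) m & topw m]) (msupp g))).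
- move=> /hasP [m1 m1g /and3P [s1 o1 t1]].
  have key : forall m, m \in msupp g -> sim m m0 -> topw m && so (ltd w) m.
    move=> m mg sm; have sm1 : sim m m1 by apply: sim_trans sm (sim_sym s1).
    have le1 := so_min o1 sm1.
    have le2 : mwt w m <= mwt w m1 by move/allP: t1 => /(_ m mg).
    have eqw : mwt w m = mwt w m1 by apply/eqP; rewrite eq_le le1 le2.
    apply/andP; split.
      by apply/allP => m' hm'; rewrite eqw; move/allP: t1 => /(_ m' hm').
    apply: min_so => x hx; rewrite eqw; apply: so_min o1 _.
    by apply: sim_trans hx sm1.
  rewrite big_seq_cond (eq_big (fun m => (m \in msupp g) && sim m m0) (fun m => g@_m)).
  + rewrite -big_seq_cond; apply: (etrans _ (fiber_sum m0 Ig)).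
    by apply: eq_bigl => m; rewrite Amap_sim.
  + move=> m; case: (boolP (m \in msupp g)) => //= mg.
    by case: (boolP (sim m m0)) => //= sm; have /andP [] := key m mg sm.
  + move=> m /andP [mg /andP [sm _]]; have /andP [ht _] := key m mg sm.
    by move: ht; rewrite /topw => ->.
- move=> /hasPn H; rewrite big1_seq // => m /andP [/andP [sm om] mg].
  by have := H m mg; rewrite sm om /= /topw => /negbTE ->.
Qed.

Lemma phi_sum w m0 (T : Type) (r : seq T) (F : T -> poly) :
  phi w m0 (\sum_(x <- r) F x) = \sum_(x <- r) phi w m0 (F x).
Proof. by apply: (big_morph _ (phiD w m0) (phi0 w m0)). Qed.

Lemma init_phi w p : init_ideal w I p -> forall m0, phi w m0 p = 0.
Proof.
move=> hp m0; apply: (ig_ind (P := fun p => phi w m0 p = 0)) hp.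
- exact: phi0.
- by move=> p1 q1 h1 h2; rewrite phiD h1 h2 addr0.
- move=> h g [f [If ->]].
  rewrite (mpolyE h) mulr_suml phi_sum big1 // => u _.
  by rewrite -scalerAl phiZ -in_form_mulX (phi_in_form _ _ (toric_mul _ If)) mulr0.
Qed.

Lemma in_form_const w (f : poly) (c : R) :
  (forall m, m \in msupp f -> mwt w m = c) -> in_form w f = f.
Proof.
move=> H; apply/mpolyP => y; rewrite in_formE.
case: (boolP (y \in msupp f)) => hy.
  by rewrite (_ : all _ _ = true) //; apply/allP => m hm; rewrite H // H.
by rewrite (memN_msupp_eq0 hy); case: ifP.
Qed.

Lemma in_form_binom w (m x : mn) : mwt w x < mwt w m ->
  in_form w ('X_[m] - 'X_[x] : poly) = 'X_[m].
Proof.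
move=> hlt; have hxm : x != m by apply: contraTneq hlt => ->; rewrite ltxx.
have sub : {subset msupp ('X_[m] - 'X_[x] : poly) <= [:: m; x]}.
  by move=> y /msuppB_le; rewrite !msuppX.
apply/mpolyP => y; rewrite in_formE mcoeffB !mcoeffX.
case: (m =P y) => [<-|hmy].
  rewrite (negbTE hxm) subr0 (_ : all _ _ = true) //.
  apply/allP => z /sub; rewrite !inE => /orP [/eqP ->|/eqP ->] //; exact: ltW.
case: (x =P y) => [<-|hxy]; last by rewrite subrr; case: ifP.
rewrite (_ : all _ _ = false) //; apply/negbTE/allPn; exists m; last by rewrite -ltNge.
rewrite mcoeff_msupp mcoeffB !mcoeffX eqxx eq_sym (negbTE hxm) /= subr0.
by rewrite eq_sym oner_neq0.
Qed.

End Groebner.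


Section Groebner2.
Variable R : realType.
Variable n : nat.
Hypothesis n_gt0 : (0 < n)%N.
Notation C := (R[i]).
Notation poly := {mpoly C[n + n]}.
Notation mn := ('X_{1.. n + n}).
Notation I := (@toric_ideal C n).
Notation mwt := Defs.mweight.
Notation lsh i := (lshift n (i : 'I_n)).
Notation rsh i := (rshift n (i : 'I_n)).
Implicit Types w : 'cV[R]_(n + n).

Lemma phi_init w p : (forall m0, phi w m0 p = 0) -> init_ideal w I p.
Proof.
have [k] := ubnP (size (msupp p)); elim: k p => // k IH p hk hphi.
case e: (msupp p) => [|m s].
  by rewrite (msuppnil0 e); exact: ig0.
have mp : m \in msupp p by rewrite e mem_head.
have pm0 : p@_m != 0 by rewrite -mcoeff_msupp.
case: (boolP (so (ltd w) m)) => om.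
- have [x [xp xm /andP [sx ox] px0]] :=
    sum_other (msupp_uniq p) mp (introT andP (conj (sim_refl m) om)) pm0 (hphi m).
  set f : poly := 'X_[m] - 'X_[x].
  have If : I f by apply: binom_in; apply/eqP; rewrite Amap_sim // sim_sym.
  have eqw : mwt w x = mwt w m.
    by apply/eqP; rewrite eq_le (so_min ox (sim_sym sx)) (so_min om sx).
  have inf : in_form w f = f.
    apply: (@in_form_const _ _ _ _ (mwt w m)) => y /msuppB_le; rewrite !msuppX !inE.
    by case/orP => /eqP ->.
  set q := p - p@_m *: f.
  have -> : p = q + (p@_m)%:MP * f by rewrite mul_mpolyC /q subrK.
  apply: igD; last by apply: igM; exists f; split => //; rewrite inf.
  apply: IH.
    rewrite -ltnS; apply: leq_trans hk; rewrite ltnS; apply: (size_lt (m := m)) => //.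
    + move=> y; rewrite !mcoeff_msupp /q mcoeffB mcoeffZ mcoeffB !mcoeffX.
      case: (m =P y) => [<-|]; first by rewrite pm0.
      case: (x =P y) => [<-|]; first by rewrite px0.
      by move=> _ _; rewrite subrr mulr0 subr0.
    + rewrite mcoeff_msupp /q mcoeffB mcoeffZ mcoeffB !mcoeffX eqxx eq_sym (negbTE xm).
      by rewrite /= subr0 mulr1 subrr eqxx.
  move=> m0; rewrite /q phiB phiZ phiB !phiX hphi om ox.
  have -> : sim x m0 = sim m m0.
    by apply/idP/idP => h; [apply: sim_trans (sim_sym sx) h | apply: sim_trans sx h].
  by rewrite subrr mulr0 subrr.
- have [c [kk [l [em hr hs]]]] := so_neg om.
  set x := (c + U_(lsh l) + U_(rsh kk))%MM in hs.
  have hlt : mwt w x < mwt w m by rewrite em /x wt_swap; move: hr; rewrite /ltd; lra.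
  set q := p - p@_m *: 'X_[m].
  have -> : p = q + (p@_m)%:MP * 'X_[m] by rewrite mul_mpolyC /q subrK.
  apply: igD; last first.
    apply: igM; exists ('X_[m] - 'X_[x]); split; last by rewrite in_form_binom.
    by apply: binom_in; apply/eqP; rewrite Amap_sim // sim_sym.
  apply: IH.
    rewrite -ltnS; apply: leq_trans hk; rewrite ltnS; apply: (size_lt (m := m)) => //.
    + move=> y; rewrite !mcoeff_msupp /q mcoeffB mcoeffZ mcoeffX.
      case: (m =P y) => [<-|]; first by rewrite pm0.
      by move=> _; rewrite /= mulr0 subr0.
    + by rewrite mcoeff_msupp /q mcoeffB mcoeffZ mcoeffX eqxx /= mulr1 subrr eqxx.
  move=> m0; rewrite /q phiB phiZ phiX hphi (negbTE om) andbF.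
  by rewrite mulr0 subrr.
Qed.

Lemma init_char w p : init_ideal w I p <-> forall m0, phi w m0 p = 0.
Proof. by split; [exact: init_phi | exact: phi_init]. Qed.

Lemma groeb_half w1 w2 i j : same_set (init_ideal w1 I) (init_ideal w2 I) ->
  ltd w1 i j -> ltd w2 i j.
Proof.
move=> hs h1; apply/negPn/negP => h2.
set m : mn := (U_(lsh j) + U_(rsh i))%MM.
have o1 : ~~ so (ltd w1) m.
  apply/negP => /soP /(_ j i); rewrite /m !mnmDE !Ull !Urr !Ulr !Url !eqxx addn0 add0n.
  by move=> /(_ isT isT); rewrite h1.
have o2 : so (ltd w2) m.
  apply/soP => k l; rewrite /m !mnmDE !Ull !Urr !Ulr !Url addn0 add0n.
  by case: (j =P k) => // <- _; case: (i =P l) => // <- _.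
have : init_ideal w1 I 'X_[m].
  by apply/init_char => m0; rewrite phiX (negbTE o1) andbF.
move/hs/init_char/(_ m); rewrite phiX sim_refl o2 /=.
by move/eqP; rewrite oner_eq0.
Qed.

Lemma groeb_class w w' : same_set (init_ideal w' I) (init_ideal w I) <->
  (forall i j, ltd w' i j = ltd w i j).
Proof.
split.
- move=> hs i j; apply/idP/idP; first exact: groeb_half.
  by apply: groeb_half => p; split => /hs.
- move=> H p; rewrite !init_char.
  have E : forall m0, phi w' m0 p = phi w m0 p.
    move=> m0; rewrite /phi; apply: eq_bigl => m; congr (_ && _).
    by rewrite /so; apply: eq_forallb => k; apply: eq_forallb => l; rewrite H.
  by split => h m0; [rewrite -E | rewrite E].
Qed.

End Groebner2.


Lemma rank_perm n (r : rel 'I_n) : irreflexive r -> transitive r ->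
  (forall i j, i != j -> r i j || r j i) ->
  exists s : 'S_n, forall i j, (s i < s j)%N = r i j.
Proof.
move=> irr tr tot.
pose f i := #|[set j | r j i]|.
have mono : forall i j, r i j -> (f i < f j)%N.
  move=> i j hij; apply: proper_card; apply/properP; split.
    by apply/subsetP => k; rewrite !inE => hk; apply: tr hk hij.
  by exists i; rewrite !inE ?irr.
have key : forall i j, (f i < f j)%N = r i j.
  move=> i j; apply/idP/idP; last exact: mono.
  case: (i =P j) => [->|/eqP hne]; first by rewrite ltnn.
  by case/orP: (tot _ _ hne) => // /mono h1 h2; move: (ltn_trans h1 h2); rewrite ltnn.
have flt : forall i, (f i < n)%N.
  move=> i; rewrite -[X in (_ < X)%N]card_ord; apply: proper_card; apply/properP; split.
    by apply/subsetP.
  by exists i; rewrite ?inE ?irr.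
have inj : injective (fun i => Ordinal (flt i)).
  move=> i j /(congr1 val) /= e; apply/eqP; apply/negPn/negP => hne.
  by case/orP: (tot _ _ hne) => /mono; rewrite e ltnn.
by exists (perm inj) => i j; rewrite !permE /= key.
Qed.

Section Polytope.
Variable R : realType.
Variable n : nat.
Notation lsh i := (lshift n (i : 'I_n)).
Notation rsh i := (rshift n (i : 'I_n)).
Implicit Types (s : 'S_n) (d : 'I_n -> R).

Definition vals d s : R := \sum_i d i * ((s i).+1)%:R.
Definition consd d s := forall i j, d i < d j -> (s i < s j)%N.
Definition Maxs d s := forall s', vals d s' <= vals d s.

Lemma sum_ord_le (x : 'I_n) : (\sum_(v < n) (v <= x)%N = x.+1)%N.
Proof.
rewrite (_ : (\sum_(v < n) (v <= x))%N = \sum_(0 <= v < n) (v <= x))%N; last by rewrite big_mkord.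
rewrite (@big_cat_nat _ _ _ x.+1 0 n _ _ (leq0n _) (ltn_ord x)) /=.
rewrite [X in (_ + X)%N]big_nat_cond [X in (_ + X)%N]big1; last first.
  by move=> v /andP [/andP [h1 _] _]; move: h1; rewrite ltnNge => /negbTE ->.
rewrite addn0 big_nat_cond (eq_bigr (fun _ => 1%N)); last first.
  by move=> v /andP [/andP [_ h] _]; rewrite -ltnS h.
by rewrite -big_nat_cond sum_nat_const_nat muln1 subn0.
Qed.

Lemma count_le s (a : 'I_n) : \sum_b ((s b <= s a)%N)%:R = ((s a).+1)%:R :> R.
Proof.
rewrite -natr_sum; congr (_%:R).
rewrite (reindex_inj (@perm_inj _ s^-1)) /=.
under eq_bigr do rewrite permKV.
exact: sum_ord_le.
Qed.

Definition Gs d s (a b : 'I_n) : R :=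
  d a * ((s b <= s a)%N)%:R + d b * ((s a <= s b)%N)%:R.

Lemma vals_pairs d s : vals d s + vals d s = \sum_a \sum_b Gs d s a b.
Proof.
have E : vals d s = \sum_a \sum_b d a * ((s b <= s a)%N)%:R.
  by apply: eq_bigr => a _; rewrite -mulr_sumr count_le.
rewrite {1}E [X in _ + X]E [X in _ + X]exchange_big -big_split /=.
by apply: eq_bigr => a _; rewrite -big_split.
Qed.

Lemma perm_ne s a b : a != b -> (s a : nat) != s b.
Proof. by move=> h; apply: contra h => /eqP /ord_inj /perm_inj ->. Qed.

Lemma Gs_le d s s' a b : consd d s -> Gs d s' a b <= Gs d s a b.
Proof.
move=> hc; rewrite /Gs.
case: (a =P b) => [->|/eqP hab]; first by rewrite !leqnn.
have n1 := perm_ne s hab; have n2 := perm_ne s' hab.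
have [h|h|h] := ltngtP (s a) (s b); last by move: n1; rewrite h eqxx.
- have hd : d a <= d b.
    by rewrite leNgt; apply/negP => /(hc b a) h'; move: (ltn_trans h h'); rewrite ltnn.
  have [h'|h'|h'] := ltngtP (s' a) (s' b); rewrite /= ?mulr1 ?mulr0 ?addr0 ?add0r;
    try lra; by move: n2; rewrite h' eqxx.
- have hd : d b <= d a.
    by rewrite leNgt; apply/negP => /(hc a b) h'; move: (ltn_trans h h'); rewrite ltnn.
  have [h'|h'|h'] := ltngtP (s' a) (s' b); rewrite /= ?mulr1 ?mulr0 ?addr0 ?add0r;
    try lra; by move: n2; rewrite h' eqxx.
Qed.

Lemma Gs_lt d s s' i j : consd d s -> d i < d j -> (s' j < s' i)%N ->
  Gs d s' i j < Gs d s i j.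
Proof.
move=> hc hd h'; have h := hc _ _ hd; rewrite /Gs.
have e1 : (s j <= s i)%N = false by rewrite leqNgt h.
have e2 : (s' i <= s' j)%N = false by rewrite leqNgt h'.
rewrite (ltnW h) e1 (ltnW h') e2 /= ?mulr1 ?mulr0 ?addr0 ?add0r.
exact: hd.
Qed.

Lemma sum_lt_real (I : finType) (F H : I -> R) i :
  (forall a, F a <= H a) -> F i < H i -> \sum_a F a < \sum_a H a.
Proof.
move=> hle hlt; rewrite (bigD1 i) //= [X in _ < X](bigD1 i) //=.
by apply: ltr_leD => //; apply: ler_sum => a _.
Qed.

Lemma rearr d s s' : consd d s -> vals d s' <= vals d s.
Proof.
move=> hc.
suff : vals d s' + vals d s' <= vals d s + vals d s by lra.
rewrite !vals_pairs; apply: ler_sum => a _; apply: ler_sum => b _; exact: Gs_le.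
Qed.

Lemma rearr_strict d s s' i j : consd d s -> d i < d j -> (s' j < s' i)%N ->
  vals d s' < vals d s.
Proof.
move=> hc hd h'.
suff : vals d s' + vals d s' < vals d s + vals d s by lra.
rewrite !vals_pairs; apply: (sum_lt_real (i := i)).
  by move=> a; apply: ler_sum => b _; exact: Gs_le.
apply: (sum_lt_real (i := j)); first by move=> b; exact: Gs_le.
exact: Gs_lt.
Qed.

Lemma ex_cons d : exists s, consd d s.
Proof.
pose r := fun a b : 'I_n => (d a < d b) || (d a == d b) && (a < b)%N.
have [|||s hs] := @rank_perm n r.
- by move=> a; rewrite /r ltxx eqxx ltnn.
- move=> b a c; rewrite /r => /orP [h1|/andP [/eqP e1 h1]] /orP [h2|/andP [/eqP e2 h2]].
  + by rewrite (lt_trans h1 h2).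
  + by rewrite -e2 h1.
  + by rewrite e1 h2.
  + by rewrite e1 e2 eqxx (ltn_trans h1 h2) orbT.
- move=> a b hab; rewrite /r; case: (ltgtP (d a) (d b)) => [//|//|e].
  by rewrite ?e ?eqxx ?ltxx /= -neq_ltn.
- by exists s => a b hd; rewrite hs /r hd.
Qed.

Lemma Maxs_cons d s : Maxs d s <-> consd d s.
Proof.
split; last by move=> hc s'; exact: rearr.
move=> hm i j hd; have [s0 h0] := ex_cons d.
have hij : i != j by apply: contraTneq hd => ->; rewrite ltxx.
have := perm_ne s hij; case: ltngtP => // h _.
by have := rearr_strict h0 hd h; rewrite ltNge hm.
Qed.

End Polytope.


Section Faces.
Variable R : realType.
Variable n : nat.
Notation lsh i := (lshift n (i : 'I_n)).
Notation rsh i := (rshift n (i : 'I_n)).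
Notation vec := ('cV[R]_(n + n)).

Definition pt (s : 'S_n) : vec := col_mx (perm_vec R s) (- perm_vec R s).
Definition PP : vec -> Prop := conv pt.

Lemma dot_pt (b : vec) s : dotv b (pt s) = vals (dd b) s.
Proof.
rewrite /dotv big_split_ord /= /vals -big_split /=; apply: eq_bigr => i _.
rewrite /pt col_mxEu col_mxEd !mxE /dd; ring.
Qed.

Lemma dot_conv (T : finType) (b : vec) (lam : T -> R) (pts : T -> vec) :
  dotv b (\sum_t lam t *: pts t) = \sum_t lam t * dotv b (pts t).
Proof.
rewrite /dotv.
under eq_bigr do rewrite summxE mulr_sumr.
rewrite exchange_big /=; apply: eq_bigr => t _; rewrite mulr_sumr.
by apply: eq_bigr => l _; rewrite mxE; ring.
Qed.

Lemma PP_vertex s : PP (pt s).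
Proof.
exists (fun t => (t == s)%:R); split.
- by move=> t; rewrite ler0n.
- by rewrite (bigD1 s) //= eqxx big1 ?addr0 // => t /negbTE ->.
- by rewrite (bigD1 s) //= eqxx scale1r big1 ?addr0 // => t /negbTE ->; rewrite scale0r.
Qed.

Lemma dot_le (b : vec) s0 y : Maxs (dd b) s0 -> PP y -> dotv b y <= vals (dd b) s0.
Proof.
move=> hm [mu [mu0 mu1 ->]]; rewrite dot_conv.
rewrite -[X in _ <= X]mul1r -mu1 mulr_suml; apply: ler_sum => t _.
by rewrite dot_pt; apply: ler_wpM2l => //; exact: hm.
Qed.

Lemma face_fwd (b : vec) (lam : 'S_n -> R) :
  (forall t, 0 <= lam t) -> \sum_t lam t = 1 ->
  face_max PP b (\sum_t lam t *: pt t) -> forall s, 0 < lam s -> Maxs (dd b) s.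
Proof.
move=> l0 l1 [_ hf] s ls.
have [s0 /Maxs_cons h0] := ex_cons (dd b).
have := hf _ (PP_vertex s0); rewrite dot_pt dot_conv => hge.
have E : \sum_t lam t * (vals (dd b) s0 - vals (dd b) t) = 0.
  apply/eqP; rewrite eq_le; apply/andP; split; last first.
    by apply: sumr_ge0 => t _; apply: mulr_ge0 => //; rewrite subr_ge0; exact: h0.
  under eq_bigr do rewrite mulrBr.
  rewrite sumrB -mulr_suml l1 mul1r subr_le0.
  rewrite (eq_bigr (fun t => lam t * dotv b (pt t))); first exact: hge.
  by move=> t _; rewrite dot_pt.
have := psumr_eq0P _ E.
have /(_ _) : forall t, (true : bool) -> 0 <= lam t * (vals (dd b) s0 - vals (dd b) t).
  by move=> t _; apply: mulr_ge0 => //; rewrite subr_ge0; exact: h0.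
move=> hpos /(_ hpos s isT) /eqP; rewrite mulf_eq0 (gt_eqF ls) /= subr_eq0 => /eqP e.
by move=> s'; rewrite -e; exact: h0.
Qed.

Lemma face_bwd (b : vec) (lam : 'S_n -> R) :
  (forall t, 0 <= lam t) -> \sum_t lam t = 1 ->
  (forall s, 0 < lam s -> Maxs (dd b) s) -> face_max PP b (\sum_t lam t *: pt t).
Proof.
move=> l0 l1 hm; have [s0 /Maxs_cons h0] := ex_cons (dd b).
split; first by exists lam.
move=> y hy; apply: le_trans (dot_le h0 hy) _.
rewrite dot_conv -[X in X <= _]mul1r -l1 mulr_suml le_eqVlt; apply/orP; left.
apply/eqP; apply: eq_bigr => t _; rewrite dot_pt.
have := l0 t; rewrite le_eqVlt => /orP [/eqP <-|lt]; first by rewrite !mul0r.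
congr (_ * _); apply/eqP; rewrite eq_le; apply/andP; split; [exact: hm | exact: h0].
Qed.

Lemma vertex_face (b : vec) s : face_max PP b (pt s) <-> Maxs (dd b) s.
Proof.
have l0 : forall t : 'S_n, 0 <= ((t == s)%:R : R) by move=> t; rewrite ler0n.
have l1 : \sum_t ((t == s)%:R : R) = 1.
  by rewrite (bigD1 s) //= eqxx big1 ?addr0 // => t /negbTE ->.
have e : pt s = \sum_t (t == s)%:R *: pt t.
  by rewrite (bigD1 s) //= eqxx scale1r big1 ?addr0 // => t /negbTE ->; rewrite scale0r.
rewrite e; split.
  by move/(face_fwd l0 l1)/(_ s); rewrite eqxx ltr01 => /(_ isT).
move=> hm; apply: face_bwd => // t; case: (t =P s) => [->//|]; by rewrite ltxx.
Qed.

Lemma cons_eq (b a : vec) s : (forall i j, ltd b i j = ltd a i j) ->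
  consd (dd b) s <-> consd (dd a) s.
Proof.
move=> H; split=> hc i j h; apply: hc.
  by have := H i j; rewrite /ltd h.
by have := H i j; rewrite /ltd h.
Qed.

Lemma face_half (b a : vec) i j : same_set (face_max PP b) (face_max PP a) ->
  ltd b i j -> ltd a i j.
Proof.
move=> hs hb; apply/negPn/negP => ha; rewrite /ltd -leNgt in ha.
have hij : i != j by apply: contraTneq hb => ->; rewrite /ltd ltxx.
pose key := fun u : 'I_n => if u == i then n else (u : nat).
have key_inj : forall u v, key u = key v -> u = v.
  move=> u v; rewrite /key; case: (u =P i) => [->|hu]; case: (v =P i) => [->|hv] //.
  - by move=> e; have := ltn_ord v; rewrite -e ltnn.
  - by move=> e; have := ltn_ord u; rewrite e ltnn.
  - by move/ord_inj.
pose r := fun u v : 'I_n => (dd a u < dd a v) || (dd a u == dd a v) && (key u < key v)%N.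
have [|||s hs'] := @rank_perm n r.
- by move=> u; rewrite /r ltxx eqxx ltnn.
- move=> v u w; rewrite /r => /orP [h1|/andP [/eqP e1 h1]] /orP [h2|/andP [/eqP e2 h2]].
  + by rewrite (lt_trans h1 h2).
  + by rewrite -e2 h1.
  + by rewrite e1 h2.
  + by rewrite e1 e2 eqxx (ltn_trans h1 h2) orbT.
- move=> u v huv; rewrite /r; case: (ltgtP (dd a u) (dd a v)) => [//|//|e].
  rewrite ?e ?eqxx ?ltxx /=; case: ltngtP => // e'.
  by move: huv; rewrite (key_inj _ _ e') eqxx.
have ca : consd (dd a) s by move=> u v h; rewrite hs' /r h.
have : face_max PP a (pt s) by apply/vertex_face/Maxs_cons.
move/hs/vertex_face/Maxs_cons/(_ i j hb).
rewrite hs' /r; move: ha; rewrite le_eqVlt => /orP [/eqP e|h].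
  have hji : (j == i) = false by rewrite eq_sym (negbTE hij).
  rewrite e ltxx eqxx /= /key eqxx hji /=.
  by move=> h; have := ltn_trans h (ltn_ord j); rewrite ltnn.
by rewrite (lt_gtF h) (gt_eqF h).
Qed.

Lemma face_class (b a : vec) : same_set (face_max PP b) (face_max PP a) <->
  (forall i j, ltd b i j = ltd a i j).
Proof.
split.
- move=> hs i j; apply/idP/idP; first exact: face_half.
  by apply: face_half => x; split => /hs.
- move=> H x; split.
  + move=> hx; have [[lam [l0 l1 ex]] _] := hx; rewrite ex in hx *.
    apply: face_bwd => // s hl.
    apply/Maxs_cons; apply: (proj1 (cons_eq s H)); apply/Maxs_cons.
    exact: (@face_fwd b lam l0 l1 hx s hl).
  + move=> hx; have [[lam [l0 l1 ex]] _] := hx; rewrite ex in hx *.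
    apply: face_bwd => // s hl.
    apply/Maxs_cons; apply: (proj2 (cons_eq s H)); apply/Maxs_cons.
    exact: (@face_fwd a lam l0 l1 hx s hl).
Qed.

End Faces.


Lemma sum_col_mx (R : nzRingType) (T : finType) m1 m2 (f : T -> 'cV[R]_m1) (g : T -> 'cV[R]_m2) :
  \sum_t col_mx (f t) (g t) = col_mx (\sum_t f t) (\sum_t g t).
Proof.
apply: (big_rec3 (fun a b c => a = col_mx b c)); first by rewrite col_mx0.
by move=> t a b c _ ->; rewrite add_col_mx.
Qed.

Section Part1.
Variable R : realType.
Variable n : nat.
Notation vec := ('cV[R]_(n + n)).

Lemma sum_enum (X : nmodType) (F : 'S_n -> X) :
  \sum_s F s = \sum_(i < #|{: 'S_n}|) F (enum_val i).
Proof.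
rewrite (reindex (@enum_val _ (mem {: 'S_n}))) //.
by exists enum_rank => [i _|s _]; [exact: enum_valK | exact: enum_rankK].
Qed.

Lemma PP_polytope : is_polytope (@PP R n).
Proof.
exists #|{: 'S_n}|, (fun i => pt R (enum_val i)) => x; split.
- move=> [lam [l0 l1 ->]]; exists (fun i => lam (enum_val i)); split => //.
    by rewrite -sum_enum.
  by rewrite -(sum_enum (fun s => lam s *: pt R s)).
- move=> [lam [l0 l1 ->]]; exists (fun s => lam (enum_rank s)); split => //.
    by rewrite sum_enum -l1; apply: eq_bigr => i _; rewrite enum_valK.
  by rewrite sum_enum; apply: eq_bigr => i _; rewrite enum_valK.
Qed.

Lemma PP_conv (lam : 'S_n -> R) :
  \sum_s lam s *: pt R s = col_mx (\sum_s lam s *: perm_vec R s) (- \sum_s lam s *: perm_vec R s).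
Proof.
rewrite /pt; under eq_bigr do rewrite scale_col_mx.
by rewrite sum_col_mx -sumrN; congr col_mx; apply: eq_bigr => s _; rewrite scalerN.
Qed.

Definition Mint : 'M[int]_(n + n) := block_mx 1%:M 0 1%:M 1%:M.

Lemma PP_unimod : unimod_equiv (@PP R n) (@permutohedron0 R n).
Proof.
exists Mint, 0; split.
  by rewrite unitmxE /Mint det_lblock !det1 mulr1 unitr1.
have hM : map_mx intr Mint = block_mx 1%:M 0 1%:M 1%:M :> 'M[R]_(n + n).
  by rewrite /Mint map_block_mx map_mx1 map_mx0.
rewrite hM map_mx0 => y; split.
- move=> [x0 [[lam [l0 l1 ->]] ->]].
  exists (\sum_s lam s *: pt R s); split; first by exists lam.
  by rewrite PP_conv mul_block_col !mul1mx mul0mx addr0 subrr addr0.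
- move=> [x [[lam [l0 l1 ->]] ->]].
  exists (\sum_s lam s *: perm_vec R s); split; first by exists lam.
  by rewrite PP_conv mul_block_col !mul1mx mul0mx addr0 subrr addr0.
Qed.

Lemma closure_ext (S S' : vec -> Prop) : (forall x, S x <-> S' x) ->
  forall x, Defs.closure S x <-> Defs.closure S' x.
Proof.
move=> H x; split => hc eps he; have [y [hy hl]] := hc eps he; exists y; split => //.
  by apply/H.
by apply/H.
Qed.

Lemma PP_gfan : (0 < n)%N -> gfan_eq_nfan (@toric_ideal (R[i]) n) (@PP R n).
Proof.
move=> hn K; split => [[w hK]|[a hK]]; [exists w | exists a]; move=> x; rewrite hK.
- apply: closure_ext => y; rewrite groeb_class //; apply: iff_sym; exact: face_class.
- apply: closure_ext => y; rewrite /normal_cone face_class; apply: iff_sym; exact: groeb_class.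
Qed.

Lemma part1 : (0 < n)%N -> exists P : 'cV[R]_(n + n) -> Prop,
      state_polytope (@toric_ideal (R[i]) n) P /\
      unimod_equiv P (@permutohedron0 R n).
Proof.
move=> hn; exists (@PP R n); split; last exact: PP_unimod.
by split; [exact: PP_polytope | exact: PP_gfan].
Qed.

End Part1.


Section MonOrder.
Variable N : nat.
Variable lt : rel 'X_{1.. N}.
Hypothesis hlt : monomial_order lt.

Lemma mo_irr a : lt a a = false.
Proof. by case: hlt => h _ _ _ _; apply/negbTE. Qed.
Lemma mo_trans a b c : lt a b -> lt b c -> lt a c.
Proof. by case: hlt => _ h _ _ _; apply: h. Qed.
Lemma mo_total a b : a != b -> lt a b || lt b a.
Proof. by case: hlt => _ _ h _ _; apply: h. Qed.
Lemma mo_addr a b c : lt a b -> lt (a + c)%MM (b + c)%MM.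
Proof. by case: hlt => _ _ _ h _; apply: h. Qed.
Lemma mo_addl a b c : lt a b -> lt (c + a)%MM (c + b)%MM.
Proof. by rewrite ![(c + _)%MM]addmC; apply: mo_addr. Qed.
Lemma mo_cancel a b c : lt (a + c)%MM (b + c)%MM -> lt a b.
Proof.
move=> h; case: (a =P b) => [e|/eqP hne]; first by move: h; rewrite e mo_irr.
case/orP: (mo_total hne) => // hba.
by have := mo_trans h (mo_addr c hba); rewrite mo_irr.
Qed.

End MonOrder.

Section Part2.
Variable R : realType.
Variable n : nat.
Hypothesis n_gt0 : (0 < n)%N.
Notation C := (R[i]).
Notation poly := {mpoly C[n + n]}.
Notation mn := ('X_{1.. n + n}).
Notation I := (@toric_ideal C n).
Notation mwt := Defs.mweight.
Notation lsh i := (lshift n (i : 'I_n)).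
Notation rsh i := (rshift n (i : 'I_n)).
Implicit Types w : 'cV[R]_(n + n).
Variable lt : rel mn.
Hypothesis hlt : monomial_order lt.

Definition prec w (x m : mn) : bool :=
  (mwt w x < mwt w m) || ((mwt w x == mwt w m) && lt x m).

Lemma prec_irr w m : prec w m m = false.
Proof. by rewrite /prec ltxx eqxx (mo_irr hlt). Qed.

Lemma prec_trans w a b c : prec w a b -> prec w b c -> prec w a c.
Proof.
rewrite /prec => /orP [h1|/andP [/eqP e1 h1]] /orP [h2|/andP [/eqP e2 h2]].
- by rewrite (lt_trans h1 h2).
- by rewrite -e2 h1.
- by rewrite e1 h2.
- by rewrite e1 e2 eqxx (mo_trans hlt h1 h2) orbT.
Qed.

Lemma prec_add w x m u : prec w x m -> prec w (x + u)%MM (m + u)%MM.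
Proof.
rewrite /prec !mwtD => /orP [h|/andP [/eqP e h]].
  by rewrite ltrD2r h.
by rewrite e eqxx ltxx (mo_addr hlt u h) orbT.
Qed.

Definition NM w (m : mn) := exists x, sim x m /\ prec w x m.

Lemma NM_add w m u : NM w m -> NM w (m + u)%MM.
Proof. by move=> [x [sx px]]; exists (x + u)%MM; split; [exact: simD | exact: prec_add]. Qed.

Lemma ig_sum_seq (G : poly -> Prop) (T : eqType) (s : seq T) (F : T -> poly) :
  (forall x, x \in s -> ideal_gen G (F x)) -> ideal_gen G (\sum_(x <- s) F x).
Proof.
elim: s => [|x s IH] H; first by rewrite big_nil; exact: ig0.
rewrite big_cons; apply: igD; first by apply: H; rewrite mem_head.
by apply: IH => y hy; apply: H; rewrite inE hy orbT.
Qed.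

Lemma init_lt_char w p :
  init_ideal_lt w lt I p <-> (forall m, m \in msupp p -> NM w m).
Proof.
split.
- apply: (ig_ind (P := fun p => forall m, m \in msupp p -> NM w m)).
  + by move=> m; rewrite msupp0.
  + move=> p1 q1 h1 h2 m /msuppD_le; rewrite mem_cat => /orP [] ?; [exact: h1 | exact: h2].
  + move=> h g [f [If [m0 [m0f cond ->]]]] y.
    rewrite -scalerAr => /msuppZ_le; rewrite (perm_mem (msuppMX _ _)).
    move=> /mapP [u _ ->]; apply: NM_add.
    have f0 : f@_m0 != 0 by rewrite -mcoeff_msupp.
    have [x [xf xm /eqP ax fx]] := sum_other (msupp_uniq f) m0f (eqxx (Amap m0)) f0 (fiber_sum m0 If).
    exists x; split; last exact: (cond x xf xm).
    by rewrite -Amap_sim // ax.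
- move=> H; rewrite [p]mpolyE; apply: ig_sum_seq => m hm.
  rewrite -mul_mpolyC; apply: igM.
  have [x [sx px]] := H m hm.
  have xm : x != m by apply: contraTneq px => ->; rewrite prec_irr.
  exists ('X_[m] - 'X_[x]); split.
    by apply: binom_in; apply/eqP; rewrite Amap_sim // sim_sym.
  exists m; split.
  + by rewrite mcoeff_msupp mcoeffB !mcoeffX eqxx (negbTE xm) /= subr0 oner_neq0.
  + move=> m' /msuppB_le; rewrite !msuppX !inE => /orP [/eqP ->|/eqP ->]; first by rewrite eqxx.
    by move=> _; exact: px.
  + by rewrite mcoeffB !mcoeffX eqxx (negbTE xm) /= subr0 scale1r.
Qed.

Definition Ua (l k : 'I_n) : mn := (U_(lsh l) + U_(rsh k))%MM.

Definition tri w (l k : 'I_n) : bool :=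
  (dd w l < dd w k) || (dd w l == dd w k) && lt (Ua l k) (Ua k l).

Lemma tri_irr w k : tri w k k = false.
Proof. by rewrite /tri ltxx eqxx (mo_irr hlt). Qed.

Lemma Ua_neq (k l : 'I_n) : k != l -> Ua k l != Ua l k.
Proof.
move=> hkl; apply/eqP => /(congr1 (fun m : mn => m (lsh k))).
rewrite /Ua !mnmDE !Ull !Url eqxx eq_sym (negbTE hkl) /=; lia.
Qed.

Lemma tri_total w k l : k != l -> tri w k l || tri w l k.
Proof.
move=> hkl; rewrite /tri; case: (ltgtP (dd w k) (dd w l)) => //= e.
by rewrite ?e ?eqxx /=; apply: (mo_total hlt); apply: Ua_neq.
Qed.

Lemma tri_trans w a b c : tri w a b -> tri w b c -> tri w a c.
Proof.
rewrite /tri => /orP [h1|/andP [/eqP e1 h1]] /orP [h2|/andP [/eqP e2 h2]].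
- by rewrite (lt_trans h1 h2).
- by rewrite -e2 h1.
- by rewrite e1 h2.
- rewrite e1 e2 eqxx /=; apply/orP; right.
  have h3 := mo_addr hlt (Ua b c) h1.
  have h4 := mo_addr hlt (Ua b a) h2.
  have e3 : (Ua b a + Ua b c)%MM = (Ua b c + Ua b a)%MM by rewrite addmC.
  rewrite e3 in h3; have h5 := mo_trans hlt h3 h4.
  apply: (mo_cancel hlt (c := (U_(lsh b) + U_(rsh b))%MM)).
  have e4 : forall x y : 'I_n, (Ua x y + (U_(lsh b) + U_(rsh b)))%MM = (Ua x b + Ua b y)%MM.
    by move=> x y; apply/mnmP => t; rewrite /Ua !mnmDE; lia.
  rewrite !e4; move: h5.
  have e5 : (Ua a b + Ua b c)%MM = (Ua a c + (U_(lsh b) + U_(rsh b)))%MM by rewrite e4.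
  have e6 : (Ua c b + Ua b a)%MM = (Ua c a + (U_(lsh b) + U_(rsh b)))%MM by rewrite e4.
  by rewrite -e4 -(e4 c a) -e5 -e6.
Qed.

Lemma tri_prec w (c : mn) k l : tri w l k ->
  prec w (c + U_(lsh l) + U_(rsh k))%MM (c + U_(lsh k) + U_(rsh l))%MM.
Proof.
rewrite /tri /prec wt_swap => /orP [h|/andP [/eqP e h]].
  by apply/orP; left; lra.
apply/orP; right; rewrite e subrr addr0 eqxx /=.
by rewrite -!addmA; apply: mo_addl.
Qed.

Lemma NM_so w (m : mn) : NM w m <-> ~~ so (tri w) m.
Proof.
split.
- move=> [x [sx px]]; apply/negP => hso.
  suff : x = m \/ prec w m x.
    by case=> [e|h]; [move: px; rewrite e prec_irr | have := prec_trans h px; rewrite prec_irr].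
  move/soP: hso => H.
  apply: (descent (Q := fun x => x = m \/ prec w m x)) sx; first by left.
  move=> c k l hkl h1 h2 hQ.
  have htri : tri w l k.
    have := H l k h1 h2; have := tri_total w hkl; case: (tri w k l) => //= -> .
  have hp := tri_prec c htri.
  case: hQ => [<-|hq]; first by right.
  by right; apply: prec_trans hq hp.
- move=> /so_neg [c [k [l [em hr hs]]]]; exists (c + U_(lsh l) + U_(rsh k))%MM; split => //.
  by rewrite em; apply: tri_prec.
Qed.

Lemma dd_pi (s : 'S_n) (i : 'I_n) :
  dd (pi_weight R s) i = 2 * (s i)%:R + 1 - n%:R.
Proof.
rewrite /dd /pi_weight col_mxEu col_mxEd !mxE natrB; last exact: ltnW.
rewrite -addn1 natrD; ring.
Qed.

Lemma tri_pi (s : 'S_n) l k : tri (pi_weight R s) l k = (s l < s k)%N.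
Proof.
rewrite /tri !dd_pi.
have -> : (2 * (s l)%:R + 1 - n%:R < 2 * (s k)%:R + 1 - n%:R :> R) = (s l < s k)%N.
  apply/idP/idP => h.
    by rewrite -(ltr_nat R); lra.
  by move: h; rewrite -(ltr_nat R) => h; lra.
case: (s l < s k)%N => //=; apply/negbTE/negP => /andP [/eqP e].
have e2 : s l = s k.
  apply: ord_inj; apply/eqP; rewrite -(eqr_nat R); apply/eqP; lra.
by move: (perm_inj e2) => ->; rewrite (mo_irr hlt).
Qed.

Lemma so_ext (r1 r2 : 'I_n -> 'I_n -> bool) (m : mn) : r1 =2 r2 -> so r1 m = so r2 m.
Proof.
by move=> H; rewrite /so; apply: eq_forallb => k; apply: eq_forallb => l; rewrite H.
Qed.

Lemma same_lt w1 w2 : tri w1 =2 tri w2 ->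
  same_set (init_ideal_lt w1 lt I) (init_ideal_lt w2 lt I).
Proof.
move=> H p; rewrite !init_lt_char; split => h m hm; apply/NM_so.
  by rewrite -(so_ext m H); apply/NM_so; apply: h.
by rewrite (so_ext m H); apply/NM_so; apply: h.
Qed.

Lemma part2a w : exists s : 'S_n,
  same_set (init_ideal_lt w lt I) (init_ideal_lt (pi_weight R s) lt I).
Proof.
have [|||s hs] := @rank_perm n (tri w).
- exact: tri_irr.
- by move=> b a c; apply: tri_trans.
- exact: tri_total.
exists s; apply: same_lt => l k; by rewrite tri_pi hs.
Qed.

Lemma part2_half (s s' : 'S_n) i j :
  same_set (init_ideal_lt (pi_weight R s) lt I) (init_ideal_lt (pi_weight R s') lt I) ->
  (s i < s j)%N -> (s' i < s' j)%N.
Proof.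
move=> hs h; apply/negPn/negP => h'.
set m : mn := Ua j i.
have o1 : ~~ so (tri (pi_weight R s)) m.
  apply/negP => /soP /(_ j i); rewrite /m /Ua !mnmDE !Ull !Urr !Ulr !Url !eqxx addn0 add0n.
  by move=> /(_ isT isT); rewrite tri_pi h.
have o2 : so (tri (pi_weight R s')) m.
  apply/soP => k l; rewrite /m /Ua !mnmDE !Ull !Urr !Ulr !Url addn0 add0n.
  by case: (j =P k) => // <- _; case: (i =P l) => // <- _; rewrite tri_pi.
have : init_ideal_lt (pi_weight R s) lt I 'X_[m].
  by apply/init_lt_char => m'; rewrite msuppX inE => /eqP ->; apply/NM_so.
move/hs/init_lt_char/(_ m); rewrite msuppX mem_head => /(_ isT) /NM_so.
by rewrite o2.
Qed.

Lemma sum_ord_lt (x : 'I_n) : (\sum_(v < n) (v < x)%N = x)%N.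
Proof.
rewrite (_ : (\sum_(v < n) (v < x))%N = \sum_(0 <= v < n) (v < x))%N; last by rewrite big_mkord.
rewrite (@big_cat_nat _ _ _ x 0 n _ _ (leq0n _) (ltnW (ltn_ord x))) /=.
rewrite [X in (_ + X)%N]big_nat_cond [X in (_ + X)%N]big1; last first.
  by move=> v /andP [/andP [h1 _] _]; move: h1; rewrite leqNgt => /negbTE ->.
rewrite addn0 big_nat_cond (eq_bigr (fun _ => 1%N)); last first.
  by move=> v /andP [/andP [_ h] _]; rewrite h.
by rewrite -big_nat_cond sum_nat_const_nat muln1 subn0.
Qed.

Lemma count_lt (s : 'S_n) (a : 'I_n) : (\sum_b (s b < s a)%N)%N = s a.
Proof.
rewrite (reindex_inj (@perm_inj _ s^-1)) /=.
under eq_bigr do rewrite permKV.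
exact: sum_ord_lt.
Qed.

Lemma part2b (s s' : 'S_n) :
  same_set (init_ideal_lt (pi_weight R s) lt I) (init_ideal_lt (pi_weight R s') lt I) ->
  s = s'.
Proof.
move=> hs.
have hs' : same_set (init_ideal_lt (pi_weight R s') lt I) (init_ideal_lt (pi_weight R s) lt I).
  by move=> p; split => /hs.
have E : forall i j, (s i < s j)%N = (s' i < s' j)%N.
  by move=> i j; apply/idP/idP; [exact: part2_half | exact: part2_half].
apply/permP => a; apply: ord_inj; rewrite -count_lt -[in RHS]count_lt.
by apply: eq_bigr => b _; rewrite E.
Qed.

End Part2.

Theorem mainTheorem6 (R : realType) (n : nat) : (1 <= n)%N ->
  (* I_{S_n} has a state polytope unimodularly equivalent to Pi_n *)
  (exists P : 'cV[R]_(n + n) -> Prop,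
      state_polytope (@toric_ideal (R[i]) n) P /\
      unimod_equiv P (@permutohedron0 R n)) /\
  (* exactly n! distinct initial ideals, namely those for (pi, pi^c) *)
  (forall lt : rel (multinom (n + n)), monomial_order lt ->
     (forall w : 'cV[R]_(n + n), exists s : 'S_n,
        same_set (init_ideal_lt w lt (@toric_ideal (R[i]) n))
                 (init_ideal_lt (@pi_weight R n s) lt (@toric_ideal (R[i]) n))) /\
     (forall s s' : 'S_n,
        same_set (init_ideal_lt (@pi_weight R n s) lt (@toric_ideal (R[i]) n))
                 (init_ideal_lt (@pi_weight R n s') lt (@toric_ideal (R[i]) n)) ->
        s = s')).
Proof.
move=> hn; split; first exact: part1.
move=> lt hlt; split.
- move=> w; exact: part2a.
- move=> s s'; exact: part2b.
Qed.
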